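(* Let $n,k$ be positive integers. Define $\varphi:[(k+1)n]\to[kn]$ by $\varphi(x)=x-\lfloor (x-1)/(k+1)\rfloor$ for $x<n(k+1)$ and $\varphi(n(k+1))=1$; thus $\varphi$ identifies exactly the pairs $\{k+1,k+2\},\{2(k+1),2(k+1)+1\},\dots,\{(n-1)(k+1),(n-1)(k+1)+1\},\{n(k+1),1\}$ and preserves the cyclic order otherwise. For $\pi\in NC_{k+1}(n)$ let $f(\pi)$ be the finest partition of $[kn]$ such that for every block $V\in\pi$ the set $\varphi(V)$ is contained in a single block of $f(\pi)$. Then $f(\pi)\in NC^k(n)$ for all $\pi\in NC_{k+1}(n)$, and $f:NC_{k+1}(n)\to NC^k(n)$ is a bijection.
   Context: A partition $\pi$ of $[N]=\{1,\dots,N\}$ is non-crossing if there are no $1\le a<b<c<d\le N$ with $a,c$ in one block and $b,d$ in another. $NC^k(n)$ is the set of non-crossing partitions of $[kn]$ all of whose blocks have size divisible by $k$. $NC_{k+1}(n)$ is the set of non-crossing partitions of $[(k+1)n]$ all of whose blocks have size exactly $k+1$. *)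

(* Defs.v *)
(* Ground set [N] = {1..N} is modelled 0-based as 'I_N
   (element i : 'I_N stands for i+1); the cyclic/linear order is the order on 'I_N. *)
From mathcomp Require Import all_boot.
Set Implicit Arguments.
Unset Strict Implicit.
Unset Printing Implicit Defensive.

Definition is_set_partition (N : nat) (P : {set {set 'I_N}}) : bool :=
  partition P [set: 'I_N].

Definition noncrossing (N : nat) (P : {set {set 'I_N}}) : Prop :=
  forall (a b c d : 'I_N) (A B : {set 'I_N}),
    A \in P -> B \in P -> A != B ->
    a < b -> b < c -> c < d ->
    a \in A -> c \in A -> b \in B -> d \in B -> False.

Definition NCup (k n : nat) (P : {set {set 'I_(k * n)}}) : Prop :=
  is_set_partition P /\ noncrossing P /\ (forall B, B \in P -> k %| #|B|).

Definition NClow (k n : nat) (P : {set {set 'I_(k.+1 * n)}}) : Prop :=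
  is_set_partition P /\ noncrossing P /\ (forall B, B \in P -> #|B| = k.+1).

(* The map phi, 0-based: for y = x-1 with x in [(k+1)n],
   phi(x) - 1 = (x-1) - floor((x-1)/(k+1)) if x < n(k+1), and phi(n(k+1)) - 1 = 0. *)
Definition phi0 (k n y : nat) : nat :=
  if y < (k.+1 * n).-1 then y - y %/ k.+1 else 0.

Definition phi_rel (k n : nat) (pi : {set {set 'I_(k.+1 * n)}}) : rel 'I_(k * n) :=
  fun x y => [exists V in pi, exists a in V, exists b in V,
                (phi0 k n a == x) && (phi0 k n b == y)].

(* f(pi): the finest partition of [kn] such that phi(V) lies in a single block for
   every V in pi, i.e. the partition into classes of the equivalence relation
   generated by phi_rel (reflexive-transitive closure of a symmetric relation). *)
Definition f_map (k n : nat) (pi : {set {set 'I_(k.+1 * n)}}) : {set {set 'I_(k * n)}} :=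
  equivalence_partition (connect (phi_rel pi)) [set: 'I_(k * n)].

Arguments NCup : clear implicits.
Arguments NClow : clear implicits.
Arguments f_map : clear implicits.

(* Main.v *)
Require Import Defs.
From mathcomp Require Import all_boot zify.
Set Implicit Arguments.
Unset Strict Implicit.
Unset Printing Implicit Defensive.

Definition dist (N a b : nat) := if a <= b then b - a else N + b - a.
Definition inarc (N a b w : nat) := (0 < dist N a w) && (dist N a w < dist N a b).
Definition csucc (N y : nat) := if y.+1 == N then 0 else y.+1.
Definition cpred (N y : nat) := if y == 0 then N - 1 else y - 1.

Ltac dl := unfold inarc, dist, csucc, cpred in *;
  repeat (match goal with
          | H : context[if _ then _ else _] |- _ => revert H
          | H : is_true (_ && _) |- _ => revert H
          | H : (_ && _) = _ |- _ => revert H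
          | |- context[if _ then _ else _] => case: ifP => ?
          end);
  repeat (let h := fresh "h" in intro h; try (case/andP: h => ??)); lia.

Lemma dist_lt N a b : a < N -> b < N -> dist N a b < N.
Proof. move=> *; dl. Qed.

Lemma dist_inj N a b c : a < N -> b < N -> c < N -> dist N a b = dist N a c -> b = c.
Proof. move=> *; dl. Qed.

Lemma dist0 N a b : a < N -> b < N -> (dist N a b == 0) = (a == b).
Proof. move=> *. apply/eqP/eqP; move=> *; dl. Qed.

Lemma arc_cases (N a b c c' : nat) : a < N -> b < N -> c < N -> c' < N -> c' != a -> c' != b ->
  inarc N a b c -> inarc N a b c' = false ->
  ((c' < a) && (a < c) && (c < b)) || ((a < c) && (c < b) && (b < c')) ||
  ((b < c') && (c' < a) && (a < c)) || ((c < b) && (b < c') && (c' < a)).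
Proof. move=> *; dl. Qed.

Section Gen.
Variable N m : nat.
Variable P : {set {set 'I_N}}.
Hypothesis HP : partition P [set: 'I_N].
Hypothesis HNC : noncrossing P.

Lemma triv : trivIset P. Proof. by case/and3P: HP. Qed.

Lemma disj A B x : A \in P -> B \in P -> A != B -> x \in A -> x \in B -> False.
Proof.
move=> AP BP AB xA xB.
by have := disjointFr (trivIsetP triv _ _ AP BP AB) xA; rewrite xB.
Qed.

Lemma ord_neq (a b : 'I_N) : a != b -> (a : nat) != b.
Proof. by []. Qed.

Lemma arc_closed V C (a b c c' : 'I_N) : V \in P -> C \in P -> C != V ->
  a \in V -> b \in V -> c \in C -> c' \in C -> inarc N a b c -> inarc N a b c'.
Proof.
move=> VP CP CV aV bV cC c'C hc.
case H: (inarc N a b c') => //; exfalso.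
have na : (c' : nat) != a by apply/eqP=> /val_inj e; apply: (disj CP VP CV c'C); rewrite e.
have nb : (c' : nat) != b by apply/eqP=> /val_inj e; apply: (disj CP VP CV c'C); rewrite e.
have VC : V != C by rewrite eq_sym.
have := arc_cases (ltn_ord a) (ltn_ord b) (ltn_ord c) (ltn_ord c') na nb hc H.
case/orP=> [/orP[/orP[|]|]|] /andP[/andP[h1 h2] h3].
- exact: (HNC CP VP CV (a:=c') (b:=a) (c:=c) (d:=b)).
- exact: (HNC VP CP VC (a:=a) (b:=c) (c:=b) (d:=c')).
- exact: (HNC VP CP VC (a:=b) (b:=c') (c:=a) (d:=c)).
- exact: (HNC CP VP CV (a:=c) (b:=b) (c:=c') (d:=a)).
Qed.

Lemma card_blocks (S : {set 'I_N}) : #|S| = \sum_(C in P) #|S :&: C|.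
Proof.
have E1 : \sum_(x in S) 1 = \sum_(x in cover P) (if x \in S then 1 else 0).
  by rewrite (cover_partition HP) big_mkcond [RHS]big_mkcond; apply: eq_bigr => x _; rewrite in_setT.
rewrite -sum1_card E1 (big_trivIset _ triv).
apply: eq_bigr => C _; rewrite -sum1_card big_mkcond /= [RHS]big_mkcond /=.
by apply: eq_bigr => x _; rewrite inE; case: (x \in S); case: (x \in C).
Qed.

Hypothesis Hdiv : forall C, C \in P -> m %| #|C|.

Lemma union_dvd (S : {set 'I_N}) :
  (forall C c c', C \in P -> c \in C -> c' \in C -> c \in S -> c' \in S) -> m %| #|S|.
Proof.
move=> cl; rewrite card_blocks; apply: dvdn_sum => C CP.
case: (boolP [exists x, x \in S :&: C]) => [/existsP[x]|/existsPn h].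
- rewrite inE => /andP[xS xC].
  suff -> : S :&: C = C by apply: Hdiv.
  apply/setP => y; rewrite inE; case yC: (y \in C); rewrite ?andbF ?andbT //.
  exact: cl xC yC xS.
- suff -> : S :&: C = set0 by rewrite cards0 dvdn0.
  by apply/setP => y; rewrite (negbTE (h y)) inE.
Qed.


Lemma card_lt (D : nat) : D <= N -> #|[set j : 'I_N | j < D]| = D.
Proof.
elim: D => [|D IH] hD.
  by apply/eqP; rewrite cards_eq0; apply/eqP/setP => j; rewrite !inE.
have -> : [set j : 'I_N | j < D.+1] = Ordinal hD |: [set j : 'I_N | j < D].
  by apply/setP => j; rewrite !inE ltnS leq_eqVlt.
rewrite cardsU1 IH ?(ltnW hD) // inE /= ltnn.
by rewrite add1n.
Qed.

Lemma card_arc (a b : 'I_N) : #|[set w : 'I_N | inarc N a b w]| = (dist N a b).-1.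
Proof.
have la := ltn_ord a.
pose rot := fun w : 'I_N => Ordinal (dist_lt la (ltn_ord w)).
have rinj : injective rot.
  move=> w1 w2 /(congr1 val) /= e; apply: val_inj; exact: dist_inj la (ltn_ord w1) (ltn_ord w2) e.
have -> : [set w : 'I_N | inarc N a b w] = rot @^-1: [set j : 'I_N | 0 < j < dist N a b].
  by apply/setP => w; rewrite !inE.
rewrite card_preimset //.
have hD : dist N a b <= N by apply: ltnW; apply: dist_lt la (ltn_ord b).
have := card_lt hD; rewrite (cardsD1 (Ordinal (leq_ltn_trans (leq0n a) la))) inE /=.
have -> : [set j : 'I_N | j < dist N a b] :\ Ordinal (leq_ltn_trans (leq0n a) la) =
          [set j : 'I_N | 0 < j < dist N a b].
  apply/setP => j; rewrite !inE; case: j => [[|j] hj] //=.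
by case: (dist N a b) => [|d] /= e; lia.
Qed.

Lemma gap_eq (V : {set 'I_N}) (a b : 'I_N) :
  (dist N a b).-1 = #|[set w : 'I_N | inarc N a b w] :&: V| + #|[set w : 'I_N | inarc N a b w] :\: V|.
Proof. by rewrite cardsID card_arc. Qed.

Lemma gap_dvd V (a b : 'I_N) : V \in P -> a \in V -> b \in V ->
  m %| #|[set w : 'I_N | inarc N a b w] :\: V|.
Proof.
move=> VP aV bV; apply: union_dvd => C c c' CP cC c'C.
rewrite !inE => /andP[cV ca].
have CV : C != V by apply/eqP => e; move: cV; rewrite -e cC.
rewrite (arc_closed VP CP CV aV bV cC c'C ca) andbT.
by apply/negP => c'V; apply: (disj CP VP CV c'C c'V).
Qed.

Lemma nextP V (a : 'I_N) : V \in P -> a \in V -> 1 < #|V| ->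
  exists u, [/\ u \in V, u != a & forall w, w \in V -> w != a -> dist N a u <= dist N a w].
Proof.
move=> VP aV /card_gt1P[x [y [xV yV xy]]].
have [b [bV ba]] : exists b, b \in V /\ b != a.
  case: (eqVneq x a) => [e|]; last by exists x.
  by exists y; split=> //; rewrite -e eq_sym.
case: (@arg_minnP _ b (fun u => (u \in V) && (u != a)) (fun u => dist N a u)); first by rewrite bV ba.
move=> u /andP[uV ua] min; exists u; split=> // w wV wa; apply: min; by rewrite wV wa.
Qed.

End Gen.

Lemma res_dist N m (a b : nat) : m %| N -> a < N -> b < N -> (a + dist N a b) %% m = b %% m.
Proof.
move=> /dvdnP[q ->] la lb; rewrite /dist; case: leqP => h.
  by rewrite subnKC.
have -> : a + (q * m + b - a) = q * m + b by lia.
by rewrite modnMDl.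
Qed.

Lemma dist_add N a b c : a < N -> b < N -> c < N ->
  dist N a b + dist N b c < N -> dist N a c = dist N a b + dist N b c.
Proof. move=> *; dl. Qed.

Lemma dist_split N a b c : a < N -> b < N -> c < N -> dist N a b <= dist N a c ->
  dist N a c = dist N a b + dist N b c.
Proof. move=> *; dl. Qed.

Lemma dist_self N a : dist N a a = 0.
Proof. by rewrite /dist leqnn subnn. Qed.

Section Gen2.
Variable N m : nat.
Variable P : {set {set 'I_N}}.
Hypothesis HP : partition P [set: 'I_N].
Hypothesis HNC : noncrossing P.
Hypothesis Hdiv : forall C, C \in P -> m %| #|C|.
Hypothesis HmN : m %| N.

Lemma next_res V (a u : 'I_N) : V \in P -> a \in V -> u \in V -> u != a ->
  (forall w, w \in V -> w != a -> dist N a u <= dist N a w) -> u %% m = a.+1 %% m.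
Proof.
move=> VP aV uV ua min.
have e0 : [set w : 'I_N | inarc N a u w] :&: V = set0.
  apply/setP => w; rewrite !inE; apply/negP => /andP[/andP[h1 h2] wV].
  have wa : w != a by apply/eqP => e; move: h1; rewrite e dist_self.
  by have := min w wV wa; rewrite leqNgt h2.
have := gap_eq HP V a u; rewrite e0 cards0 add0n => e1.
have := gap_dvd HP HNC Hdiv VP aV uV; rewrite -e1 => /dvdnP[q eq].
have d1 : 0 < dist N a u.
  by rewrite lt0n dist0 ?ltn_ord //; apply: contra ua => /eqP e; apply/eqP/val_inj.
rewrite -(res_dist HmN (ltn_ord a) (ltn_ord u)).
have -> : a + dist N a u = q * m + a.+1 by lia.
by rewrite modnMDl.
Qed.

Lemma same_res V (a b : 'I_N) : V \in P -> #|V| <= m -> a \in V -> b \in V -> a != b ->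
  a %% m = b %% m -> False.
Proof.
move=> VP Vm aV bV ab eab.
have la := ltn_ord a; have lb := ltn_ord b.
have d1 : 0 < dist N a b by rewrite lt0n dist0.
have hD : m %| dist N a b.
  have := res_dist HmN la lb; rewrite -eab => e.
  have : (a + dist N a b == a + 0 %[mod m]) by rewrite addn0 e.
  by rewrite eqn_modDl mod0n; apply.
have hX : #|[set w : 'I_N | inarc N a b w] :&: V| <= #|V :\ a :\ b|.
  apply: subset_leq_card; apply/subsetP => w; rewrite !inE => /andP[/andP[h1 h2] ->].
  by rewrite andbT; apply/andP; split; apply/eqP => e; move: h1 h2; rewrite e ?dist_self ?ltnn.
have cV : #|V| = #|V :\ a :\ b| + 2.
  have := cardsD1 a V; have := cardsD1 b (V :\ a); rewrite aV !inE eq_sym ab bV /=.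
  by move=> h1 h2; rewrite h2 h1 addnA addnC.
have := gap_eq HP V a b; have := gap_dvd HP HNC Hdiv VP aV bV.
move=> /dvdnP[q eq]; rewrite eq => e2.
move: hD => /dvdnP[q2 eq2].
move: e2 eq2 hX cV Vm d1; clear; move=> e2 eq2 hX cV Vm d1.
case: (leqP q2 q) => h.
  have h3 : q2 * m <= q * m by exact: leq_mul h (leqnn m).
  lia.
have h3 : q.+1 * m <= q2 * m by exact: leq_mul h (leqnn m).
rewrite mulSn in h3; lia.
Qed.

Lemma zero_in_arc (B : {set 'I_N}) : B \in P -> 0 < m -> forall d (x1 x2 : 'I_N),
  dist N x1 x2 <= d -> x1 \in B -> x2 \in B -> x1 != x2 -> x2 %% m <= x1 %% m ->
  exists w : 'I_N, [/\ w \in B, w %% m = 0, 0 < dist N x1 w & dist N x1 w <= dist N x1 x2].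
Proof.
move=> BP m0; elim => [|d IH] x1 x2 hd h1 h2 h12 hr.
  by move: hd; rewrite leqn0 dist0 ?ltn_ord // (negbTE (ord_neq h12)).
have gt1 : 1 < #|B| by apply/card_gt1P; exists x1, x2.
have [u [uB ux1 min]] := nextP BP h1 gt1.
have ur := next_res BP h1 uB ux1 min.
have dpos : 0 < dist N x1 u by rewrite lt0n dist0 ?ltn_ord // eq_sym.
have dle : dist N x1 u <= dist N x1 x2 by apply: min; rewrite // eq_sym.
case: (eqVneq (u %% m) 0) => hu; first by exists u.
have ur' : u %% m = (x1 %% m).+1.
  by move: hu; rewrite ur modnS; case: ifP.
case: (eqVneq u x2) => [e|ux2].
  by move: hr; rewrite -e ur' ltnn.
have ds := dist_split (ltn_ord x1) (ltn_ord u) (ltn_ord x2) dle.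
have hd' : dist N u x2 <= d by clear -ds hd dpos; lia.
have hr' : x2 %% m <= u %% m by rewrite ur'; apply: leqW.
have [w [wB w0 h3 h4]] := IH u x2 hd' uB h2 ux2 hr'.
have lt := dist_lt (ltn_ord x1) (ltn_ord x2).
have da : dist N x1 w = dist N x1 u + dist N u w.
  apply: (dist_add (ltn_ord x1) (ltn_ord u) (ltn_ord w)); clear -ds h4 lt; lia.
exists w; split=> //; rewrite da; clear -ds h4 lt dpos; lia.
Qed.

End Gen2.

Lemma cpred_csucc N y : y < N -> cpred N (csucc N y) = y.
Proof. move=> *; dl. Qed.

Lemma csucc_cpred N y : 0 < N -> y < N -> csucc N (cpred N y) = y.
Proof. move=> *; dl. Qed.

Lemma cpred_lt N y : y < N -> cpred N y < N.
Proof. move=> *; dl. Qed.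

Lemma csucc_lt N y : y < N -> csucc N y < N.
Proof. move=> *; dl. Qed.

Definition cyc (x w x2 : nat) := if x <= x2 then (x <= w) && (w <= x2) else (x <= w) || (w <= x2).

Lemma dist_cyc L x w x2 : x < L -> w < L -> x2 < L -> (dist L x w <= dist L x x2) = cyc x w x2.
Proof.
move=> *; rewrite /cyc; case: ifP => ?; [case: (leqP x w) => ?; case: (leqP w x2) => ? |
  case: (leqP x w) => ?; case: (leqP w x2) => ?]; dl.
Qed.

Lemma ArA N a u w : a < N -> u < N -> w < N -> inarc N a u w -> csucc N w != u ->
  inarc N a u (csucc N w).
Proof. move=> *; dl. Qed.

Lemma ArB N a u w : a < N -> u < N -> w < N -> inarc N a u (csucc N w) -> w != a ->
  inarc N a u w.
Proof. move=> *; dl. Qed.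

Lemma linarc N y z w : y < z -> z < N -> w < N -> inarc N y z w = (y < w) && (w < z).
Proof. move=> *; case: (leqP y w) => ?; case: (leqP z w) => ?; dl. Qed.

Lemma dist1 N y : 1 < N -> y < N -> dist N y (csucc N y) = 1.
Proof. move=> *; dl. Qed.

Lemma ArNC N a b c d e1 e2 : a < b -> b < c -> c < d -> d < N -> e1 < N -> e2 < N -> e1 != e2 ->
  dist N a e1 <= dist N a e2 -> dist N b e2 <= dist N b e1 ->
  dist N c e1 <= dist N c e2 -> dist N d e2 <= dist N d e1 -> False.
Proof.
move=> ab bc cd dN e1N e2N e12.
have aN : a < N by lia. have bN : b < N by lia. have cN : c < N by lia.
rewrite !dist_cyc //.
rewrite /cyc; case: (leqP a e2) => ?; case: (leqP b e1) => ?; case: (leqP c e2) => ?; case: (leqP d e1) => ?;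
 move=> *; lia.
Qed.

Lemma ArC N x x2 w : x < N -> x2 < N -> w < N -> x2 != x -> 0 < dist N x2 w -> dist N x2 w < dist N x2 x ->
  dist N x x2 < dist N x w /\ w != x.
Proof. move=> *; split; dl. Qed.

Lemma ArD N y p : y < N -> p < N -> p != y -> dist N y (cpred N p) = (dist N y p).-1.
Proof. move=> *; dl. Qed.

Lemma ArE N y1 y2 e : y1 < N -> y2 < N -> e < N -> y2 != e -> dist N y2 e < dist N y1 e ->
  dist N y1 y2 < dist N y1 e.
Proof. move=> *; dl. Qed.

Lemma ArF N y : 1 < N -> y < N -> dist N y (cpred N y) = N - 1.
Proof. move=> *; dl. Qed.

Lemma dist_inj_l N a b c : a < N -> b < N -> c < N -> dist N a c = dist N b c -> a = b.
Proof. move=> *; dl. Qed.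

Definition psi (k x : nat) := x + x %/ k.

Lemma divmodE (q r d : nat) : r < d -> (q * d + r) %/ d = q /\ (q * d + r) %% d = r.
Proof.
move=> hr; have d0 : 0 < d by case: d hr.
by rewrite divnMDl // divn_small // addn0 modnMDl modn_small.
Qed.

Lemma decomp (y d : nat) : 0 < d -> exists q r, [/\ r < d, y = q * d + r, y %/ d = q & y %% d = r].
Proof.
move=> d0; exists (y %/ d), (y %% d); split=> //; first by rewrite ltn_pmod.
exact: divn_eq.
Qed.

Section Phi.
Variables k n : nat.
Hypothesis hk : 0 < k.
Hypothesis hn : 0 < n.
Local Notation N := (k.+1 * n).
Local Notation M := (k * n).

Lemma phi_lt y : y < N -> phi0 k n y < M.
Proof.
move=> hy; rewrite /phi0; case: ifP => h; last by nia.
have [q [r [hr ey hq _]]] := decomp y (ltn0Sn k).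
rewrite hq; subst y.
have qn : q < n by nia.
nia.
Qed.

Lemma psi_facts x : x < M ->
  [/\ psi k x < N.-1, phi0 k n (psi k x) = x & psi k x %% k.+1 = x %% k].
Proof.
move=> hx; have [q [r [hr ex hq hrr]]] := decomp x hk.
have qn : q < n by nia.
have ep : psi k x = q * k.+1 + r by rewrite /psi hq ex; lia.
have [d2 m2] := divmodE q (ltnW hr : r < k.+1).
have lt : q * k.+1 + r < N.-1 by nia.
rewrite ep; split=> //; last by rewrite m2 hrr.
by rewrite /phi0 lt d2 ex; nia.
Qed.


Lemma psi_phi y : y < N -> y %% k.+1 != k -> psi k (phi0 k n y) = y.
Proof.
move=> hy; have [q [r [hr ey hq hrr]]] := decomp y (ltn0Sn k).
rewrite hrr => rk.
have rk' : r < k by clear -hr rk; lia.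
have qn : q < n by nia.
have lt : y < N.-1 by nia.
rewrite /phi0 lt hq.
have e : y - q = q * k + r by nia.
rewrite e /psi.
by have [-> _] := divmodE q rk'; nia.
Qed.

Lemma psi_mono x x' : x < x' -> psi k x < psi k x'.
Proof.
move=> h; rewrite /psi; have := @leq_div2r k x x' (ltnW h); lia.
Qed.

Lemma N_gt1 : 1 < N.
Proof. nia. Qed.

Lemma csucc_facts y : y < N -> y %% k.+1 = k ->
  [/\ csucc N y < N, csucc N y %% k.+1 = 0 & phi0 k n (csucc N y) = phi0 k n y].
Proof.
move=> hy; have [q [r [hr ey hq hrr]]] := decomp y (ltn0Sn k).
rewrite hrr => rk; subst r.
have qn : q < n by nia.
have n2 := N_gt1.
rewrite /csucc; case: ifP => [/eqP e|ne].
  split; first by clear -n2; lia.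
    by rewrite mod0n.
  rewrite /phi0 (_ : y < N.-1 = false); last by clear -e; lia.
  by case: ifP; rewrite ?div0n.
have e1 : y.+1 = q.+1 * k.+1 + 0 by nia.
have [d1 m1] := divmodE q.+1 (ltn0Sn k).
have qn1 : q.+1 < n.
  have : q.+1 != n.
    apply/eqP => h; move/negbT/eqP: ne; apply; rewrite ey -h; nia.
  by clear -qn; lia.
have lt1 : y.+1 < N.-1 by clear -ey qn1 hk; nia.
have lt0 : y < N.-1 by clear -lt1; lia.
split; first by clear -lt1; lia.
  by rewrite e1 m1.
rewrite /phi0 lt1 lt0 hq e1 d1; nia.
Qed.









Lemma phi_fiber a b : a < N -> b < N -> phi0 k n a = phi0 k n b ->
  [\/ a = b, (a %% k.+1 = k /\ b = csucc N a) | (b %% k.+1 = k /\ a = csucc N b)].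
Proof.
move=> ha hb e.
have k0 : 0 != k by rewrite eq_sym -lt0n.
case: (eqVneq (a %% k.+1) k) => ra; case: (eqVneq (b %% k.+1) k) => rb.
- have [la ra' pa] := csucc_facts ha ra.
  have [lb rb' pb] := csucc_facts hb rb.
  have : csucc N a = csucc N b.
    rewrite -(psi_phi la) ?ra' ?k0 // -(psi_phi lb) ?rb' ?k0 //.
    by rewrite pa pb e.
  by move/(congr1 (cpred N)); rewrite !cpred_csucc // => ->; constructor 1.
- have [la ra' pa] := csucc_facts ha ra.
  constructor 2; split=> //.
  rewrite -(psi_phi hb rb) -(psi_phi la) ?ra' ?k0 //.
  by rewrite pa e.
- have [lb rb' pb] := csucc_facts hb rb.
  constructor 3; split=> //.
  rewrite -(psi_phi ha ra) -(psi_phi lb) ?rb' ?k0 //.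
  by rewrite pb e.
- constructor 1.
  by rewrite -(psi_phi ha ra) -(psi_phi hb rb) e.
Qed.

Lemma res_k_phi z : z < N -> z %% k.+1 = k ->
  phi0 k n z %% k = 0 /\ cpred N (psi k (phi0 k n z)) = z.
Proof.
move=> hz rz; have [lz rz' pz] := csucc_facts hz rz.
have k0 : 0 != k by rewrite eq_sym -lt0n.
have pl : phi0 k n (csucc N z) < M by apply: phi_lt.
have [_ _ r2] := psi_facts pl.
rewrite psi_phi ?rz' ?k0 // in r2.
split; first by rewrite -pz -r2.
by rewrite -pz psi_phi ?rz' ?k0 // cpred_csucc.
Qed.

Lemma psiK w : w < M -> w %% k = 0 ->
  [/\ cpred N (psi k w) < N, cpred N (psi k w) %% k.+1 = k & phi0 k n (cpred N (psi k w)) = w].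
Proof.
move=> hw w0.
have [l1 p1 r1] := psi_facts hw.
have ly : psi k w < N by clear -l1; lia.
set y := psi k w in l1 p1 r1 ly *.
have lz := cpred_lt ly.
have [q [r [hr ey hq hrr]]] := decomp y (ltn0Sn k).
rewrite r1 w0 in hrr; subst r.
have rz : cpred N y %% k.+1 = k.
  rewrite /cpred; case: ifP => [/eqP y0|yn].
    have -> : N - 1 = n.-1 * k.+1 + k by clear -hn; nia.
    by have [_ ->] := divmodE n.-1 (ltnSn k).
  have q0 : 0 < q by clear -yn ey; nia.
  have -> : y - 1 = q.-1 * k.+1 + k by clear -ey q0; nia.
  by have [_ ->] := divmodE q.-1 (ltnSn k).
split=> //.
have [_ _ e] := csucc_facts lz rz.
by rewrite -e csucc_cpred //; clear -ly; lia.
Qed.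

Lemma phi_mono a b : a <= b -> b < N.-1 -> phi0 k n a <= phi0 k n b.
Proof.
move=> ab hb; rewrite /phi0 hb.
have -> : a < N.-1 by clear -ab hb; lia.
have [qa [ra [hra ea hqa _]]] := decomp a (ltn0Sn k).
have [qb [rb [hrb eb hqb _]]] := decomp b (ltn0Sn k).
rewrite hqa hqb.
have : qa <= qb by rewrite -hqa -hqb leq_div2r.
clear -ea eb hra hrb ab; nia.
Qed.


Lemma leq_psi a b : (psi k a <= psi k b) = (a <= b).
Proof.
case: (ltngtP a b) => h.
- by rewrite (ltnW (psi_mono h)).
- by rewrite leqNgt (psi_mono h).
- by rewrite h leqnn.
Qed.

Lemma psi_dist x w x2 : x < M -> w < M -> x2 < M ->
  dist M x w <= dist M x x2 -> dist N (psi k x) (psi k w) <= dist N (psi k x) (psi k x2).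
Proof.
move=> hx hw hx2.
have [l1 _ _] := psi_facts hx; have [l2 _ _] := psi_facts hw; have [l3 _ _] := psi_facts hx2.
rewrite !dist_cyc //; try (clear -l1 l2 l3; lia).
by rewrite /cyc !leq_psi.
Qed.

End Phi.

Definition endp (k N : nat) (th : 'I_N -> 'I_N -> bool) (a : 'I_N) : 'I_N :=
  odflt a [pick z | th a z && (z %% k.+1 == k) &&
     [forall z', (th a z' && (z' %% k.+1 == k)) ==> (dist N a z <= dist N a z')]].

Lemma endp_eq k N (th : 'I_N -> 'I_N -> bool) a e : th a e -> e %% k.+1 = k ->
  (forall z, th a z -> z %% k.+1 = k -> dist N a e <= dist N a z) -> endp k th a = e.
Proof.
move=> he re min; rewrite /endp; case: pickP => [z /andP[/andP[hz /eqP rz] /forallP mz]|none] /=.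
  apply: ord_inj; apply: (dist_inj (ltn_ord a) (ltn_ord z) (ltn_ord e)).
  apply/eqP; rewrite eqn_leq (min z hz rz) andbT.
  by move: (mz e); rewrite he re eqxx.
have := none e; rewrite he re eqxx /=; move/negbT => /forallPn [z].
by rewrite negb_imply => /andP[/andP[hz /eqP rz]]; rewrite (min z hz rz).
Qed.

Lemma eqp_rel (T : finType) (R R' : rel T) (D : {set T}) :
  (forall x y, R x y = R' x y) -> equivalence_partition R D = equivalence_partition R' D.
Proof.
move=> h; rewrite /equivalence_partition; apply: eq_imset => x.
by apply/setP => y; rewrite !inE h.
Qed.

Section Low.
Variables (k n : nat).
Hypothesis hk : 0 < k.
Hypothesis hn : 0 < n.
Local Notation N := (k.+1 * n).
Local Notation M := (k * n).

Definition phiO (y : 'I_N) : 'I_M := @Ordinal (k * n) _ (phi_lt hk hn (ltn_ord y)).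

Lemma psi_ltN x : x < M -> psi k x < N.
Proof. by move=> hx; have [h _ _] := psi_facts hk hn hx; move: h; clear; move=> *; lia. Qed.

Definition psiO (x : 'I_M) : 'I_N := @Ordinal N _ (psi_ltN (ltn_ord x)).

Lemma phiO_psiO x : phiO (psiO x) = x.
Proof. by apply: val_inj => /=; have [_ -> _] := psi_facts hk hn (ltn_ord x). Qed.

Lemma psiO_inj : injective psiO.
Proof. by move=> x y e; rewrite -(phiO_psiO x) -(phiO_psiO y) e. Qed.

Variable pi : {set {set 'I_N}}.
Hypothesis Hpi : NClow k n pi.

Lemma HP : partition pi [set: 'I_N]. Proof. by case: Hpi. Qed.
Lemma HNC : noncrossing pi. Proof. by case: Hpi => _ []. Qed.
Lemma Hsz V : V \in pi -> #|V| = k.+1. Proof. by case: Hpi => _ [] _; apply. Qed.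
Lemma Hdv V : V \in pi -> k.+1 %| #|V|. Proof. by move/Hsz ->. Qed.
Lemma HmN : k.+1 %| N. Proof. exact: dvdn_mulr. Qed.

Lemma blk (y : 'I_N) : pblock pi y \in pi /\ y \in pblock pi y.
Proof.
have c : y \in cover pi by rewrite (cover_partition HP) in_setT.
by rewrite pblock_mem // mem_pblock.
Qed.

Lemma blkE V (y : 'I_N) : V \in pi -> y \in V -> pblock pi y = V.
Proof. by move=> VP yV; apply: def_pblock => //; case/and3P: HP. Qed.

Lemma N1 V (a b : 'I_N) : V \in pi -> a \in V -> b \in V -> a %% k.+1 = b %% k.+1 -> a = b.
Proof.
move=> VP aV bV e; case: (eqVneq a b) => // ab; exfalso.
exact: (same_res HP HNC Hdv HmN VP (eq_leq (Hsz VP)) aV bV ab e).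
Qed.

Lemma N2 V : V \in pi -> exists e, e \in V /\ e %% k.+1 = k.
Proof.
move=> VP.
pose f := fun y : 'I_N => (inord (y %% k.+1) : 'I_k.+1).
have finj : {in V &, injective f}.
  move=> a b aV bV /(congr1 val); rewrite /= !inordK ?ltn_pmod //.
  exact: N1 VP aV bV.
have cf : #|f @: V| = k.+1 by rewrite card_in_imset // Hsz.
have : f @: V = setT.
  by apply/eqP; rewrite eqEcard subsetT /= cf cardsT card_ord.
move=> h; have : (ord_max : 'I_k.+1) \in f @: V by rewrite h in_setT.
case/imsetP => e eV he.
exists e; split=> //.
by move/(congr1 val): he; rewrite /= inordK ?ltn_pmod.
Qed.

Local Notation R := (phi_rel pi).
Local Notation E := (connect (phi_rel pi)).

Lemma R_sym : symmetric R.
Proof.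
suff h : forall x y, R x y -> R y x by move=> x y; apply/idP/idP; apply: h.
move=> x y /existsP[V /andP[VP /existsP[a /andP[aV /existsP[b /andP[bV /andP[ha hb]]]]]]].
apply/existsP; exists V; rewrite VP /=; apply/existsP; exists b; rewrite bV /=.
by apply/existsP; exists a; rewrite aV ha hb.
Qed.

Lemma E_sym x y : E x y = E y x.
Proof. exact: (sym_connect_sym R_sym). Qed.

Definition th (a b : 'I_N) := E (phiO a) (phiO b).

Lemma th_sym a b : th a b = th b a. Proof. exact: E_sym. Qed.
Lemma th_trans a b c : th a b -> th b c -> th a c. Proof. exact: connect_trans. Qed.
Lemma th_refl a : th a a. Proof. exact: connect0. Qed.

Lemma L1 V (a b : 'I_N) : V \in pi -> a \in V -> b \in V -> th a b.
Proof.
move=> VP aV bV; apply: connect1; apply/existsP; exists V; rewrite VP /=.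
apply/existsP; exists a; rewrite aV /=; apply/existsP; exists b; by rewrite bV /= !eqxx.
Qed.

Lemma L2 (a b : 'I_N) : phi0 k n a = phi0 k n b -> th a b.
Proof. by move=> e; rewrite /th (_ : phiO a = phiO b) ?th_refl //; apply: val_inj. Qed.

Lemma L3 (S : {set 'I_N}) :
  (forall V (a b : 'I_N), V \in pi -> a \in V -> b \in V -> a \in S -> b \in S) ->
  (forall a b : 'I_N, phi0 k n a = phi0 k n b -> a \in S -> b \in S) ->
  forall a b, th a b -> a \in S -> b \in S.
Proof.
move=> hV hF a b hab aS.
pose T := [set x : 'I_M | [exists a in S, phiO a == x]].
have memT : forall c : 'I_N, (phiO c \in T) = (c \in S).
  move=> c; rewrite inE; apply/existsP/idP => [[c' /andP[c'S /eqP e]]|cS].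
    by apply: (hF c' c) => //; move/(congr1 val): e.
  by exists c; rewrite cS eqxx.
have cl : closed R T.
  move=> x y /existsP[V /andP[VP /existsP[c /andP[cV /existsP[d /andP[dV /andP[/eqP hc /eqP hd]]]]]]].
  have -> : x = phiO c by apply: val_inj.
  have -> : y = phiO d by apply: val_inj.
  rewrite !memT; apply/idP/idP; [exact: hV VP cV dV | exact: hV VP dV cV].
by have := closed_connect cl hab; rewrite !memT aS => /esym.
Qed.


Lemma nxt (a : 'I_N) : a %% k.+1 != k -> exists u : 'I_N,
  [/\ u \in pblock pi a, u != a,
      (forall w, w \in pblock pi a -> w != a -> dist N a u <= dist N a w),
      u %% k.+1 = (a %% k.+1).+1 &
      forall w z : 'I_N, inarc N a u w -> th w z -> inarc N a u z].
Proof.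
move=> ra.
have [VP aV] := blk a.
set V := pblock pi a in VP aV *.
have gt1 : 1 < #|V| by rewrite Hsz.
have [u [uV ua min]] := nextP VP aV gt1.
have ur := next_res HP HNC Hdv HmN VP aV uV ua min.
have ar : a %% k.+1 < k.+1 by rewrite ltn_pmod.
have ur' : u %% k.+1 = (a %% k.+1).+1.
  rewrite ur -addn1 -modnDml modn_small ?addn1 //.
  by move: ar ra; clear; move=> *; lia.
exists u; split=> // w z hw hwz.
have := @L3 [set w0 : 'I_N | inarc N a u w0] _ _ w z hwz; rewrite !inE; apply => //.
- move=> V' c c' V'P cV' c'V'; rewrite !inE => hc.
  case: (eqVneq V' V) => [e|ne].
    rewrite e in cV'; exfalso.
    have ca : c != a by apply/eqP => e2; move: hc; rewrite e2 /inarc dist_self.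
    have := min c cV' ca; move: hc; rewrite /inarc => /andP[_ h1] h2.
    by move: h1 h2; clear; move=> *; lia.
  exact: (arc_closed HP HNC VP V'P ne aV uV cV' c'V' hc).
- move=> c c' e; rewrite !inE => hc.
  case: (phi_fiber hk hn (ltn_ord c) (ltn_ord c') e) => [e1 | [rc e1] | [rc' e1]].
  + by have -> : c' = c by apply: ord_inj.
  + have [_ r0 _] := csucc_facts hk hn (ltn_ord c) rc.
    have ne : csucc N c != u by apply/eqP => e2; move: r0; rewrite e2 ur'.
    by rewrite /= e1; apply: ArA.
  + have ne : (c' : nat) != a by apply/eqP => e2; move: ra; rewrite -e2 rc' eqxx.
    by rewrite e1 in hc; apply: ArB.
Qed.

Lemma endV (a : 'I_N) : exists e : 'I_N, [/\ e \in pblock pi a, e %% k.+1 = k &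
  forall z, th a z -> z %% k.+1 = k -> dist N a e <= dist N a z].
Proof.
have [VP aV] := blk a.
set V := pblock pi a in VP aV *.
have [e [eV re]] := N2 VP.
exists e; split=> // z haz rz.
rewrite leqNgt; apply/negP => hz.
case: (@arg_maxnP _ a (fun u => (u \in V) && (dist N a u <= dist N a z)) (fun u => dist N a u)).
  by rewrite aV dist_self.
move=> u /andP[uV duz] maxu.
have la := ltn_ord a; have lu := ltn_ord u; have lz := ltn_ord z.
case: (eqVneq u z) => [euz|uz].
  have zV : z \in V by rewrite -euz.
  have eze : z = e by apply: (N1 VP zV eV); rewrite rz re.
  by move: hz; rewrite eze ltnn.
have duz' : dist N a u < dist N a z.
  rewrite ltn_neqAle duz andbT; apply/eqP => h; move/eqP: uz; apply.
  by apply: ord_inj; apply: (dist_inj la lu lz h).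
have ru : u %% k.+1 != k.
  apply/eqP => ru; have eu : u = e by apply: (N1 VP uV eV); rewrite ru re.
  by move: hz duz'; rewrite -eu; clear; move=> *; lia.
have pbu : pblock pi u = V := blkE VP uV.
have [u' [u'V u'u minu' ru' cl]] := nxt ru.
rewrite pbu in u'V.
have lu' := ltn_ord u'.
case: (leqP (dist N u u') (dist N u z)) => h.
  have ds := dist_split la lu lz duz.
  have lt := dist_lt la lz.
  have du' : dist N a u' = dist N a u + dist N u u'.
    by apply: dist_add => //; move: ds lt h; clear; move=> *; lia.
  have := maxu u'; rewrite u'V /= du'.
  have dpos : 0 < dist N u u' by rewrite lt0n dist0 // eq_sym.
  by move: ds h dpos; clear; move=> *; lia.
have hin : inarc N u u' z.
  by rewrite /inarc h andbT lt0n dist0.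
have thzu : th z u by apply: (@th_trans z a u); [rewrite th_sym | exact: (L1 VP aV uV)].
by have := cl z u hin thzu; rewrite /inarc dist_self.
Qed.


Lemma endp_in (a : 'I_N) : endp k th a \in pblock pi a /\ endp k th a %% k.+1 = k.
Proof.
have [e [eV re min]] := endV a.
have [VP aV] := blk a.
by rewrite (endp_eq (L1 VP aV eV) re min).
Qed.

Lemma low_same (a b : 'I_N) : (b \in pblock pi a) = (endp k th a == endp k th b).
Proof.
have [ea ra] := endp_in a; have [eb rb] := endp_in b.
have [Va aV] := blk a; have [Vb bV] := blk b.
apply/idP/eqP => [bin|e].
  have pb : pblock pi b = pblock pi a := blkE Va bin.
  rewrite pb in eb.
  by apply: (N1 Va ea eb); rewrite ra rb.
have e1 := blkE Va ea; have e2 := blkE Vb eb.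
by rewrite -e1 e e2.
Qed.

Lemma th_gap (y z : 'I_N) : y != z -> th y z -> (forall w : 'I_N, inarc N y z w -> ~~ th y w) ->
  forall w w' : 'I_N, inarc N y z w -> th w w' -> inarc N y z w'.
Proof.
move=> yz hyz nocl w w' hw hww'.
have ly := ltn_ord y; have lz := ltn_ord z; have lw := ltn_ord w.
have n2 := N_gt1 hk hn.
case: (eqVneq (y %% k.+1) k) => ry.
  have [ls r0 pe] := csucc_facts hk hn ly ry.
  pose s := @Ordinal N _ ls.
  have ths : th y s by apply: L2; rewrite /= pe.
  have d1 : dist N y s = 1 by apply: dist1.
  case: (leqP (dist N y z) 1) => h.
    by move: hw; rewrite /inarc; move: h; clear; move=> *; lia.
  have : inarc N y z s by rewrite /inarc d1.
  by move/nocl; rewrite ths.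
have [u [uV uy minu ru cl]] := nxt ry.
have [Vy yV] := blk y.
have thu : th y u := L1 Vy yV uV.
have lu := ltn_ord u.
have zu : z = u.
  apply: ord_inj; apply: (dist_inj ly lz lu).
  case: (ltngtP (dist N y z) (dist N y u)) => // h.
  - have hin : inarc N y u z by rewrite /inarc h andbT lt0n dist0.
    have hzy : th z y by rewrite th_sym.
    by have := cl z y hin hzy; rewrite /inarc dist_self.
  - have hin : inarc N y z u by rewrite /inarc h andbT lt0n dist0 // eq_sym.
    by have := nocl u hin; rewrite thu.
by rewrite zu; rewrite zu in hw; apply: cl hw hww'.
Qed.

Lemma th_NC (a b c d : 'I_N) : a < b -> b < c -> c < d -> th a c -> th b d -> th a b.
Proof.
move=> ab bc cd hac hbd; apply/negPn/negP => hab.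
case: (@arg_maxnP _ a (fun y : 'I_N => (y < b) && th a y) (fun y => nat_of_ord y)).
  by rewrite ab th_refl.
move=> y /andP[yb hay] maxy.
case: (@arg_minnP _ c (fun z : 'I_N => (y < z) && th a z) (fun z => nat_of_ord z)).
  by rewrite hac andbT; apply: ltn_trans yb bc.
move=> z /andP[yz haz] minz.
have zc : z <= c by apply: minz; rewrite hac andbT; apply: ltn_trans yb bc.
have bz : b < z.
  case: (ltngtP b z) => // h.
    by have := maxy z; rewrite h haz /= => /(_ isT); rewrite leqNgt yz.
  by move: hab; rewrite (ord_inj h) haz.
have lz := ltn_ord z; have ly := ltn_ord y; have ld := ltn_ord d; have lb := ltn_ord b.
have yz' : y != z by apply/eqP => e; move: yz; rewrite e ltnn.
have thyz : th y z by apply: (@th_trans y a z) => //; rewrite th_sym.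
have nocl : forall w : 'I_N, inarc N y z w -> ~~ th y w.
  move=> w; rewrite linarc // => /andP[h1 h2]; apply/negP => hyw.
  have : z <= w by apply: minz; rewrite h1 /=; apply: th_trans hay hyw.
  by rewrite leqNgt h2.
have hb : inarc N y z b by rewrite linarc // yb.
have := th_gap yz' thyz nocl hb hbd; rewrite linarc // => /andP[_ dz].
by move: dz zc cd; clear; move=> *; lia.
Qed.

Lemma E_NC (x1 x2 x3 x4 : 'I_M) : x1 < x2 -> x2 < x3 -> x3 < x4 ->
  E x1 x3 -> E x2 x4 -> E x1 x2.
Proof.
move=> h1 h2 h3 e13 e24.
have := @th_NC (psiO x1) (psiO x2) (psiO x3) (psiO x4).
rewrite /th !phiO_psiO; apply => //=; apply: (psi_mono hk hn) => //.
Qed.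

Lemma E_equiv : {in [set: 'I_M] & &, equivalence_rel E}.
Proof.
move=> x y z _ _ _; split; first exact: connect0.
move=> exy; apply/idP/idP => h.
  by apply: connect_trans h; rewrite E_sym.
exact: connect_trans exy h.
Qed.

Lemma F_part : partition (f_map k n pi) [set: 'I_M].
Proof. exact: equivalence_partitionP E_equiv. Qed.

Lemma F_pblock (x y : 'I_M) : (y \in pblock (f_map k n pi) x) = E x y.
Proof. by rewrite /f_map (pblock_equivalence_partition E_equiv) ?in_setT. Qed.

Lemma F_NC : noncrossing (f_map k n pi).
Proof.
move=> a b c d A B AF BF AB ab bc cd aA cA bB dB.
have tF := F_part; case/and3P: tF => _ tri _.
have eA : pblock (f_map k n pi) a = A by apply: def_pblock.
have eB : pblock (f_map k n pi) b = B by apply: def_pblock.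
have eac : E a c by rewrite -F_pblock eA.
have ebd : E b d by rewrite -F_pblock eB.
have eab := E_NC ab bc cd eac ebd.
have bA : b \in A by rewrite -eA F_pblock.
exact: (disj F_part AF BF AB bA bB).
Qed.

Lemma F_div A : A \in f_map k n pi -> k %| #|A|.
Proof.
case/imsetP => x0 _ ->.
set A0 := [set y in [set: 'I_M] | E x0 y].
rewrite -(card_imset _ psiO_inj).
set S := [set y : 'I_N | (y %% k.+1 != k) && th (psiO x0) y].
have -> : psiO @: A0 = S.
  apply/setP => y; rewrite inE; apply/imsetP/idP => [[x xA ->]|/andP[ry hy]].
    have [_ _ r] := psi_facts hk hn (ltn_ord x).
    rewrite /= r /th !phiO_psiO; move: xA; rewrite inE in_setT /= => ->.
    have := ltn_pmod x hk; rewrite andbT; move: (x %% k); clear; move=> *; lia.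
  exists (phiO y); first by rewrite inE in_setT /=; move: hy; rewrite /th phiO_psiO.
  by apply: val_inj; rewrite /= psi_phi.
rewrite (card_blocks HP); apply: dvdn_sum => V VP.
case: (boolP [exists y, y \in S :&: V]) => [/existsP[y]|/existsPn h].
  rewrite inE => /andP[yS yV].
  have [e [eV re]] := N2 VP.
  have -> : S :&: V = V :\ e.
    apply/setP => v; rewrite !inE; case vV: (v \in V); rewrite ?andbF ?andbT //.
    have thv : th (psiO x0) v.
      apply: th_trans (L1 VP yV vV); by move: yS; rewrite inE => /andP[].
    rewrite thv andbT; apply/idP/idP => [rv|ve].
      by apply/eqP => ve; move: rv; rewrite ve re eqxx.
    by apply/eqP => rv; move/eqP: ve; apply; apply: (N1 VP vV eV); rewrite rv re.
  by have := cardsD1 e V; rewrite eV Hsz // add1n => -[<-].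
suff -> : S :&: V = set0 by rewrite cards0 dvdn0.
by apply/setP => y; rewrite (negbTE (h y)) inE.
Qed.

Lemma F_up : NCup k n (f_map k n pi).
Proof. by split; [exact: F_part | split; [exact: F_NC | exact: F_div]]. Qed.

End Low.

Section Up.
Variables (k n : nat).
Hypothesis hk : 0 < k.
Hypothesis hn : 0 < n.
Local Notation N := (k.+1 * n).
Local Notation M := (k * n).
Variable Q : {set {set 'I_M}}.
Hypothesis HQ : NCup k n Q.

Lemma HPQ : partition Q [set: 'I_M]. Proof. by case: HQ. Qed.
Lemma HNCQ : noncrossing Q. Proof. by case: HQ => _ []. Qed.
Lemma HdvQ B : B \in Q -> k %| #|B|. Proof. by case: HQ => _ [] _; apply. Qed.
Lemma HkM : k %| M. Proof. exact: dvdn_mulr. Qed.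

Lemma blkQ (x : 'I_M) : pblock Q x \in Q /\ x \in pblock Q x.
Proof.
have c : x \in cover Q by rewrite (cover_partition HPQ) in_setT.
by rewrite pblock_mem // mem_pblock.
Qed.

Lemma blkQE B (x : 'I_M) : B \in Q -> x \in B -> pblock Q x = B.
Proof. by move=> BQ xB; apply: def_pblock => //; case/and3P: HPQ. Qed.

Definition EQ (x y : 'I_M) := y \in pblock Q x.

Lemma EQ_eq x y : EQ x y = (pblock Q x == pblock Q y).
Proof.
rewrite /EQ eq_pblock //; first by case/and3P: HPQ.
by rewrite (cover_partition HPQ) in_setT.
Qed.

Definition thQ (a b : 'I_N) := EQ (phiO hk hn a) (phiO hk hn b).

Lemma thQ_eq a b : thQ a b = (pblock Q (phiO hk hn a) == pblock Q (phiO hk hn b)).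
Proof. exact: EQ_eq. Qed.

Lemma thQ_refl a : thQ a a. Proof. by rewrite thQ_eq. Qed.
Lemma thQ_sym a b : thQ a b = thQ b a. Proof. by rewrite !thQ_eq eq_sym. Qed.
Lemma thQ_trans a b c : thQ a b -> thQ b c -> thQ a c.
Proof. by rewrite !thQ_eq => /eqP -> . Qed.

Definition endQ := endp k thQ.

Lemma zero_exists (x : 'I_M) : exists w : 'I_M, w \in pblock Q x /\ w %% k = 0.
Proof.
have [BQ xB] := blkQ x; set B := pblock Q x in BQ xB *.
case: (eqVneq (x %% k) 0) => x0; first by exists x.
have k1 : 1 < k.
  case: (ltngtP 1 k) => // h; first by move: hk h; clear; move=> *; lia.
  by move: x0; move: (x : nat) => xx; rewrite -h modn1.
have gt1 : 1 < #|B|.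
  have : 0 < #|B| by apply/card_gt0P; exists x.
  by move/dvdn_leq/(_ (HdvQ BQ)) => h; apply: leq_trans k1 h.
have [y [z [yB zB yz]]] := card_gt1P gt1.
have [x' [x'B x'x]] : exists x', x' \in B /\ x' != x.
  case: (eqVneq y x) => [e|]; last by exists y.
  by exists z; split=> //; rewrite -e eq_sym.
case: (@arg_maxnP _ x' (fun u => (u \in B) && (u != x)) (fun u => dist M x u)).
  by rewrite x'B x'x.
move=> x2 /andP[x2B x2x] maxx2.
have lx := ltn_ord x; have lx2 := ltn_ord x2.
have min : forall w, w \in B -> w != x2 -> dist M x2 x <= dist M x2 w.
  move=> w wB wx2; rewrite leqNgt; apply/negP => h.
  have dpos : 0 < dist M x2 w by rewrite lt0n dist0 // eq_sym.
  have [h1 h2] := ArC (ltn_ord x) (ltn_ord x2) (ltn_ord w) x2x dpos h.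
  have := maxx2 w; rewrite wB h2 /= => /(_ isT).
  by rewrite leqNgt h1.
have xx2 : x != x2 by rewrite eq_sym.
have xr := next_res HPQ HNCQ HdvQ HkM BQ x2B xB xx2 min.
have x2r : x2 %% k <= x %% k.
  have hr := ltn_pmod x2 hk.
  have e : x %% k = (x2 %% k + 1) %% k by rewrite xr modnDml addn1.
  case: (ltngtP (x2 %% k + 1) k) => h.
  - by rewrite e (modn_small h) addn1.
  - by exfalso; move: hr h; clear; move=> *; lia.
  - by move: x0; rewrite e h modnn eqxx.
have [w [wB w0 _ _]] := zero_in_arc HPQ HNCQ HdvQ HkM BQ hk (leqnn _) xB x2B xx2 x2r.
by exists w.
Qed.


Lemma K_exists (a : 'I_N) : exists z : 'I_N, thQ a z /\ z %% k.+1 = k.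
Proof.
have [w [wB w0]] := zero_exists (phiO hk hn a).
have [lz rz pz] := psiK hk hn (ltn_ord w) w0.
exists (@Ordinal N _ lz); split=> //.
rewrite /thQ /EQ (_ : phiO hk hn (Ordinal lz) = w) //.
by apply: val_inj.
Qed.

Lemma endQ_spec a : [/\ thQ a (endQ a), endQ a %% k.+1 = k &
  forall z, thQ a z -> z %% k.+1 = k -> dist N a (endQ a) <= dist N a z].
Proof.
have [z0 [h0 r0]] := K_exists a.
case: (@arg_minnP _ z0 (fun z => thQ a z && (z %% k.+1 == k)) (fun z => dist N a z)).
  by rewrite h0 r0 eqxx.
move=> e /andP[he /eqP re] mine.
have min : forall z, thQ a z -> z %% k.+1 = k -> dist N a e <= dist N a z.
  by move=> z hz rz; apply: mine; rewrite hz rz eqxx.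
by rewrite /endQ (endp_eq he re min).
Qed.

Lemma endQ_self (z : 'I_N) : z %% k.+1 = k -> endQ z = z.
Proof.
move=> rz; apply: (endp_eq (thQ_refl z) rz) => y _ _.
by rewrite dist_self.
Qed.

Definition piQ := preim_partition endQ [set: 'I_N].

Lemma piQ_part : partition piQ [set: 'I_N].
Proof. exact: preim_partitionP. Qed.

Lemma piQ_pblock a b : (b \in pblock piQ a) = (endQ a == endQ b).
Proof.
rewrite /piQ /preim_partition (pblock_equivalence_partition (R := fun x y => endQ x == endQ y)) ?in_setT //.
move=> x y z _ _ _; split=> // /eqP ->; by [].
Qed.

Lemma thQ_end a b : endQ a = endQ b -> thQ a b.
Proof.
move=> e; have [ha _ _] := endQ_spec a; have [hb _ _] := endQ_spec b.
by apply: thQ_trans ha _; rewrite e thQ_sym.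
Qed.

Lemma weakNC (p1 p2 p3 p4 : 'I_M) : p1 <= p2 -> p2 <= p3 -> p3 <= p4 ->
  EQ p1 p3 -> EQ p2 p4 -> EQ p1 p2.
Proof.
move=> h12 h23 h34 e13 e24.
have E13 := e13; have E24 := e24.
rewrite EQ_eq in E13; rewrite EQ_eq in E24.
case: (ltngtP p1 p2) h12 => // l12 _; last by rewrite /EQ (ord_inj l12); case: (blkQ p2).
case: (ltngtP p2 p3) h23 => // l23 _; last by rewrite EQ_eq (eqP E13) (ord_inj l23).
case: (ltngtP p3 p4) h34 => // l34 _; last by rewrite EQ_eq (eqP E13) (ord_inj l34) (eqP E24).
apply/negPn/negP => ne.
have B12 : pblock Q p1 != pblock Q p2 by rewrite -EQ_eq.
have [B1 p1B] := blkQ p1; have [B2 p2B] := blkQ p2.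
exact: (HNCQ B1 B2 B12 l12 l23 l34 p1B e13 p2B e24).
Qed.

Lemma phiN1 : phi0 k n N.-1 = 0.
Proof. by rewrite /phi0 ltnn. Qed.

Lemma thQ_NC (a b c d : 'I_N) : a < b -> b < c -> c < d -> thQ a c -> thQ b d -> thQ a b.
Proof.
move=> ab bc cd hac hbd.
have ld := ltn_ord d.
case: (eqVneq (d : nat) N.-1) => dN.
  have pd : phi0 k n d = 0 by rewrite dN phiN1.
  case: (eqVneq (a : nat) 0) => a0.
    have pa : phi0 k n a = 0 by rewrite a0 /phi0; case: ifP; rewrite ?div0n.
    have had : thQ a d.
      rewrite /thQ /EQ (_ : phiO hk hn a = phiO hk hn d); first by case: (blkQ (phiO hk hn d)).
      by apply: ord_inj; rewrite /= pa pd.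
    by apply: thQ_trans had _; rewrite thQ_sym.
  have hda : thQ d a.
    apply: (@weakNC (phiO hk hn d) (phiO hk hn a) (phiO hk hn b) (phiO hk hn c)) => //=.
    - by rewrite pd.
    - by apply: phi_mono; [apply: ltnW | move: bc cd dN; clear; move=> *; lia].
    - by apply: phi_mono; [apply: ltnW | move: cd dN; clear; move=> *; lia].
    - by rewrite -/(thQ d b) thQ_sym.
  by apply: (@thQ_trans a d b); rewrite thQ_sym.
have dlt : d < N.-1 by move: ld dN; clear; move=> *; lia.
apply: (@weakNC (phiO hk hn a) (phiO hk hn b) (phiO hk hn c) (phiO hk hn d)) => //=.
- by apply: phi_mono; [apply: ltnW | move: bc cd dlt; clear; move=> *; lia].
- by apply: phi_mono; [apply: ltnW | move: cd dlt; clear; move=> *; lia].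
- by apply: phi_mono; [apply: ltnW | ].
Qed.

Lemma piQ_NC : noncrossing piQ.
Proof.
move=> a b c d A B AP BP AB ab bc cd aA cA bB dB.
have tri : trivIset piQ by case/and3P: piQ_part.
have eA : pblock piQ a = A by apply: def_pblock.
have eB : pblock piQ b = B by apply: def_pblock.
have ec : endQ a = endQ c by apply/eqP; rewrite -piQ_pblock eA.
have ed : endQ b = endQ d by apply/eqP; rewrite -piQ_pblock eB.
have ne : endQ a != endQ b.
  apply/eqP => e; have bA : b \in A by rewrite -eA piQ_pblock e.
  exact: (disj piQ_part AP BP AB bA bB).
have hac := thQ_end ec; have hbd := thQ_end ed.
case: (boolP (thQ a b)) => hab; last by move/negP: hab; apply; exact: thQ_NC ab bc cd hac hbd.
have [ha ra mina] := endQ_spec a; have [hb rb minb] := endQ_spec b.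
have [hc rc minc] := endQ_spec c; have [hd rd mind] := endQ_spec d.
rewrite -ec in hc rc minc; rewrite -ed in hd rd mind.
have t1 : thQ a (endQ b) by apply: thQ_trans hab hb.
have t2 : thQ b (endQ a) by apply: thQ_trans _ ha; rewrite thQ_sym.
have t3 : thQ c (endQ b) by apply: thQ_trans _ t1; rewrite thQ_sym.
have t4 : thQ d (endQ a) by apply: thQ_trans _ t2; rewrite thQ_sym.
have ne' : (endQ a : nat) != endQ b by [].
exact: (ArNC ab bc cd (ltn_ord d) (ltn_ord (endQ a)) (ltn_ord (endQ b)) ne'
   (mina _ t1 rb) (minb _ t2 ra) (minc _ t3 rb) (mind _ t4 ra)).
Qed.


Lemma blk_res_core (y1 y2 : 'I_N) : endQ y1 = endQ y2 -> y1 %% k.+1 = y2 %% k.+1 ->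
  y1 %% k.+1 != k -> y1 != y2 -> dist N y2 (endQ y1) < dist N y1 (endQ y1) -> False.
Proof.
move=> ee er r1 y12 hd.
have [h1 re min1] := endQ_spec y1.
have [h2 _ _] := endQ_spec y2.
rewrite -ee in h2.
have r2 : y2 %% k.+1 != k by rewrite -er.
set x1 := phiO hk hn y1; set x2 := phiO hk hn y2.
have ey1 : psi k x1 = y1 by rewrite /= psi_phi.
have ey2 : psi k x2 = y2 by rewrite /= psi_phi.
have x12 : x1 != x2.
  apply/eqP => e; move/eqP: y12; apply; apply: ord_inj; by rewrite -ey1 -ey2 e.
have [_ _ rx1] := psi_facts hk hn (ltn_ord x1).
have [_ _ rx2] := psi_facts hk hn (ltn_ord x2).
have rx : x2 %% k <= x1 %% k by rewrite -rx1 -rx2 ey1 ey2 er.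
have hy12 : thQ y1 y2 by apply: thQ_trans h1 _; rewrite thQ_sym.
have [BQ x1B] := blkQ x1.
have [w [wB w0 dw dwle]] := zero_in_arc HPQ HNCQ HdvQ HkM BQ hk (leqnn _) x1B hy12 x12 rx.
have [lz rz pz] := psiK hk hn (ltn_ord w) w0.
pose z := @Ordinal N _ lz.
have hz : thQ y1 z.
  by rewrite /thQ /EQ (_ : phiO hk hn z = w) //; apply: ord_inj; rewrite /= pz.
have m1 := min1 z hz rz.
have pd := psi_dist hk hn (ltn_ord x1) (ltn_ord w) (ltn_ord x2) dwle.
rewrite ey1 ey2 in pd.
have lw : psi k w < N by apply: psi_ltN.
have wx : (w : nat) != x1.
  by apply/eqP => e; move: dw; rewrite e dist_self.
have pwne : psi k w != y1.
  apply/eqP => e; move/eqP: wx; apply.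
  have [_ p1 _] := psi_facts hk hn (ltn_ord w).
  have [_ p2 _] := psi_facts hk hn (ltn_ord x1).
  by rewrite -p1 -p2 e ey1.
have dpos : 0 < dist N y1 (psi k w) by rewrite lt0n dist0 // eq_sym.
have dz : dist N y1 z = (dist N y1 (psi k w)).-1 := ArD (ltn_ord y1) lw pwne.
have y2e : (y2 : nat) != endQ y1 by apply/eqP => e; move: r2; rewrite e re eqxx.
have := ArE (ltn_ord y1) (ltn_ord y2) (ltn_ord (endQ y1)) y2e hd.
by move: m1 dz pd dpos; clear; move=> *; lia.
Qed.

Lemma blk_res (y1 y2 : 'I_N) : endQ y1 = endQ y2 -> y1 %% k.+1 = y2 %% k.+1 -> y1 = y2.
Proof.
move=> ee er; case: (eqVneq y1 y2) => // y12.
case: (eqVneq (y1 %% k.+1) k) => r1.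
  have r2 : y2 %% k.+1 = k by rewrite -er.
  by rewrite -(endQ_self r1) -(endQ_self r2) ee.
have [h|h|h] := ltngtP (dist N y2 (endQ y1)) (dist N y1 (endQ y1)).
- by exfalso; apply: (blk_res_core ee er r1 y12 h).
- exfalso; apply: (@blk_res_core y2 y1 (esym ee) (esym er)); [by rewrite -er | by rewrite eq_sym | by rewrite -ee].
- by apply: ord_inj; apply: (dist_inj_l (ltn_ord y1) (ltn_ord y2) (ltn_ord (endQ y1))).
Qed.

Lemma piQ_le B : B \in piQ -> #|B| <= k.+1.
Proof.
case/imsetP => x _ ->.
pose f := fun y : 'I_N => (inord (y %% k.+1) : 'I_k.+1).
have finj : {in [set y in [set: 'I_N] | endQ x == endQ y] &, injective f}.
  move=> a b; rewrite !inE /= => /eqP ha /eqP hb /(congr1 val); rewrite /= !inordK ?ltn_pmod //.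
  by apply: blk_res; rewrite -ha -hb.
rewrite -(card_in_imset finj).
by have := max_card (f @: [set y in [set: 'I_N] | endQ x == endQ y]); rewrite card_ord.
Qed.

Lemma card_K : #|[set z : 'I_N | z %% k.+1 == k]| <= n.
Proof.
have hl : forall j : 'I_n, j * k.+1 + k < N.
  move=> j; have := ltn_ord j; move: (j : nat) => jj; clear; move=> *; nia.
pose h := fun j : 'I_n => @Ordinal N _ (hl j).
apply: leq_trans (_ : #|h @: [set: 'I_n]| <= n).
  apply: subset_leq_card; apply/subsetP => z; rewrite inE => /eqP rz.
  have [q [r [hr ez hq hr2]]] := decomp z (ltn0Sn k).
  have qn : q < n.
    by rewrite -hq ltn_divLR // [n * _]mulnC.
  apply/imsetP; exists (Ordinal qn); first by rewrite in_setT.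
  by apply: ord_inj; rewrite /= ez -hr2 rz.
by have := leq_imset_card h [set: 'I_n]; rewrite cardsT card_ord.
Qed.

Lemma piQ_card : #|piQ| <= n.
Proof.
set K := [set z : 'I_N | z %% k.+1 == k].
pose Px := fun x : 'I_N => [set y in [set: 'I_N] | endQ x == endQ y].
apply: leq_trans card_K; apply: leq_trans (leq_imset_card Px K).
apply: subset_leq_card; apply/subsetP => B /imsetP[x _ ->].
have [_ rx _] := endQ_spec x.
apply/imsetP; exists (endQ x); first by rewrite inE rx.
by rewrite /Px (endQ_self rx).
Qed.

Lemma piQ_size B : B \in piQ -> #|B| = k.+1.
Proof.
move=> BP.
have tot : \sum_(C in piQ) #|C| = N by rewrite -(card_partition piQ_part) cardsT card_ord.
have s1 : \sum_(C in piQ) (k.+1 - #|C|) = #|piQ| * k.+1 - N.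
  by rewrite sumnB ?sum_nat_const ?tot // => C; apply: piQ_le.
have : k.+1 - #|B| <= \sum_(C in piQ) (k.+1 - #|C|) by rewrite (bigD1 B) //= leq_addr.
rewrite s1 => h.
have h2 := piQ_le BP.
have h3 : #|piQ| * k.+1 <= n * k.+1 by rewrite leq_mul2r piQ_card orbT.
have e : n * k.+1 = k.+1 * n by rewrite mulnC.
move: h h2 h3 e; move: #|B| #|piQ| => b p; clear; move=> *; lia.
Qed.

Lemma piQ_low : NClow k n piQ.
Proof. by split; [exact: piQ_part | split; [exact: piQ_NC | exact: piQ_size]]. Qed.

Local Notation R := (phi_rel piQ).

Lemma R_of (a b : 'I_N) : endQ a = endQ b -> R (phiO hk hn a) (phiO hk hn b).
Proof.
move=> e.
have c : a \in cover piQ by rewrite (cover_partition piQ_part) in_setT.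
apply/existsP; exists (pblock piQ a); rewrite pblock_mem //=.
apply/existsP; exists a; rewrite mem_pblock c /=.
by apply/existsP; exists b; rewrite piQ_pblock e !eqxx.
Qed.

Lemma Kfact (x : 'I_M) (z : 'I_N) : thQ (psiO hk hn x) z -> z %% k.+1 = k ->
  [/\ phiO hk hn z \in pblock Q x, phiO hk hn z %% k = 0 & cpred N (psi k (phiO hk hn z)) = z].
Proof.
move=> hz rz; have [w0 ez] := res_k_phi hk hn (ltn_ord z) rz.
split=> //; by move: hz; rewrite /thQ /EQ phiO_psiO.
Qed.

Lemma Rsucc (x s : 'I_M) : s \in pblock Q x -> s != x ->
  (forall w, w \in pblock Q x -> w != x -> dist M x s <= dist M x w) -> R x s.
Proof.
move=> sB sx min.
have [BQ xB] := blkQ x.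
have sr := next_res HPQ HNCQ HdvQ HkM BQ xB sB sx min.
set y0 := psiO hk hn x.
have py0 : phiO hk hn y0 = x by rewrite phiO_psiO.
have ly0 : (y0 : nat) < N := ltn_ord y0.
have n2 := N_gt1 hk hn.
have xr := ltn_pmod x hk.
have sne : psi k s != y0.
  apply/eqP => e; move/eqP: sx; apply; apply: ord_inj.
  have [_ p1 _] := psi_facts hk hn (ltn_ord s).
  have [_ p2 _] := psi_facts hk hn (ltn_ord x).
  by rewrite -p1 -p2 e.
have ls : psi k s < N := psi_ltN hk hn (ltn_ord s).
have KF : forall z : 'I_N, thQ y0 z -> z %% k.+1 = k ->
   (dist N y0 z = N - 1) \/
   (exists w : 'I_M, [/\ w %% k = 0, dist N y0 z = (dist N y0 (psi k w)).-1,
      dist N y0 (psi k s) <= dist N y0 (psi k w), 0 < dist N y0 (psi k w) & psi k w < N]).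
  move=> z hz rz; have [wB w0 ez] := Kfact hz rz.
  set w := phiO hk hn z in wB w0 ez *.
  case: (eqVneq w x) => [wx|wx].
    by left; rewrite -ez wx ArF.
  right; exists w.
  have pwne : psi k w != y0.
    apply/eqP => e; move/eqP: wx; apply; apply: ord_inj.
    have [_ p1 _] := psi_facts hk hn (ltn_ord w).
    have [_ p2 _] := psi_facts hk hn (ltn_ord x).
    by rewrite -p1 -p2 e.
  have lw : psi k w < N := psi_ltN hk hn (ltn_ord w).
  have dz : dist N y0 z = (dist N y0 (psi k w)).-1 by rewrite -ez ArD.
  have pd := psi_dist hk hn (ltn_ord x) (ltn_ord s) (ltn_ord w) (min w wB wx).
  have dpos : 0 < dist N y0 (psi k w) by rewrite lt0n dist0 // eq_sym.
  by split.
have phs : phiO hk hn (psiO hk hn s) = s by rewrite phiO_psiO.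
case: (eqVneq (x %% k).+1 k) => hx.
  have s0 : s %% k = 0 by rewrite sr -addn1 -modnDml addn1 hx modnn.
  have [lz0 rz0 pz0] := psiK hk hn (ltn_ord s) s0.
  pose z0 := @Ordinal N _ lz0.
  have pz : phiO hk hn z0 = s by apply: ord_inj; rewrite /= pz0.
  have ez : endQ y0 = z0.
    apply: endp_eq => //.
      by rewrite /thQ /EQ py0 pz.
    move=> z hz rz; case: (KF z hz rz) => [->|[w [w0 dz pd dpos lw]]].
      by have := ltn_ord (endQ y0); have := dist_lt ly0 (ltn_ord z0); clear; move=> *; lia.
    have dz0 : dist N y0 z0 = (dist N y0 (psi k s)).-1 by rewrite /= ArD.
    by rewrite dz0 dz; move: pd; clear; move=> *; lia.
  have := @R_of y0 z0; rewrite py0 pz; apply.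
  by rewrite ez endQ_self.
have sr' : s %% k = (x %% k).+1.
  rewrite sr -addn1 -modnDml modn_small addn1 //.
  by move: xr hx; clear; move=> *; lia.
set b := psiO hk hn s in phs *.
have [_ _ rb] := psi_facts hk hn (ltn_ord s).
have rbk' : b %% k.+1 != k.
  by rewrite /= rb sr'; move: xr hx; clear; move=> *; lia.
have [hb rbk minb] := endQ_spec b.
have thy0b : thQ y0 b by rewrite /thQ /EQ py0 phs.
have lb := ltn_ord b.
have S : forall z : 'I_N, thQ y0 z -> z %% k.+1 = k -> dist N y0 b < dist N y0 z.
  move=> z hz rz.
  have bz : (b : nat) != z by apply/eqP => e; move: rbk'; rewrite e rz eqxx.
  have nd : dist N y0 b != dist N y0 z.
    by apply/eqP => e; move/eqP: bz; apply; apply: (dist_inj ly0 lb (ltn_ord z) e).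
  case: (KF z hz rz) => [dz|[w [w0 dz pd dpos lw]]].
    by have := dist_lt ly0 lb; move: nd; rewrite dz; clear; move=> *; lia.
  have ws : psi k w != psi k s.
    apply/eqP => e; have [_ p1 _] := psi_facts hk hn (ltn_ord w).
    have [_ p2 _] := psi_facts hk hn (ltn_ord s).
    by move: w0; rewrite -p1 e p2 sr'.
  have nd2 : dist N y0 (psi k s) != dist N y0 (psi k w).
    by apply/eqP => e; move/eqP: ws; apply; apply: esym; apply: (dist_inj ly0 ls lw e).
  by move: nd nd2 pd dz; rewrite /=; clear; move=> *; lia.
have ee : endQ y0 = endQ b.
  apply: endp_eq => //.
    by apply: thQ_trans thy0b hb.
  move=> z hz rz.
  have S1 := S z hz rz.
  have S2 := S (endQ b) (thQ_trans thy0b hb) rbk.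
  have ds1 := dist_split ly0 lb (ltn_ord z) (ltnW S1).
  have ds2 := dist_split ly0 lb (ltn_ord (endQ b)) (ltnW S2).
  have hbz : thQ b z by apply: thQ_trans hz; rewrite thQ_sym.
  have := minb z hbz rz.
  by move: ds1 ds2; clear; move=> *; lia.
by have := R_of ee; rewrite py0 phs.
Qed.

Lemma chain d : forall x y : 'I_M, dist M x y <= d -> y \in pblock Q x -> connect R x y.
Proof.
elim: d => [|d IH] x y hd yB.
  have -> : y = x.
    apply: ord_inj; apply/eqP; rewrite eq_sym -(dist0 (ltn_ord x) (ltn_ord y)).
    by move: hd; rewrite leqn0.
  exact: connect0.
case: (eqVneq y x) => [->|yx]; first exact: connect0.
have [BQ xB] := blkQ x.
have gt1 : 1 < #|pblock Q x| by apply/card_gt1P; exists x, y; rewrite eq_sym.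
have [s [sB sx min]] := nextP BQ xB gt1.
have Rxs := Rsucc sB sx min.
case: (eqVneq s y) => [<-|sy]; first exact: connect1.
have dle := min y yB yx.
have ds := dist_split (ltn_ord x) (ltn_ord s) (ltn_ord y) dle.
have dpos : 0 < dist M x s by rewrite lt0n dist0 ?ltn_ord // eq_sym.
have hd' : dist M s y <= d by move: ds hd dpos; clear; move=> *; lia.
have yBs : y \in pblock Q s by rewrite (blkQE BQ sB).
exact: connect_trans (connect1 Rxs) (IH s y hd' yBs).
Qed.

Lemma connect_R (x y : 'I_M) : connect R x y = (y \in pblock Q x).
Proof.
apply/idP/idP => [h|yB]; last exact: (chain (leqnn _) yB).
have cl : closed R (pblock Q x).
  move=> u v /existsP[V /andP[VP /existsP[a /andP[aV /existsP[b /andP[bV /andP[/eqP ha /eqP hb]]]]]]].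
  have tri : trivIset piQ by case/and3P: piQ_part.
  have eV : pblock piQ a = V by apply: def_pblock.
  have eab : endQ a = endQ b by apply/eqP; rewrite -piQ_pblock eV.
  have t := thQ_end eab.
  have -> : u = phiO hk hn a by apply: ord_inj.
  have -> : v = phiO hk hn b by apply: ord_inj.
  have xc : x \in cover Q by rewrite (cover_partition HPQ) in_setT.
  have tQ : trivIset Q by case/and3P: HPQ.
  rewrite -!(eq_pblock _ tQ xc).
  by move: t; rewrite thQ_eq => /eqP ->.
have := closed_connect cl h.
by rewrite (blkQ x).2 => <-.
Qed.

Lemma f_piQ : f_map k n piQ = Q.
Proof.
rewrite /f_map (@eqp_rel _ _ (fun x y => y \in pblock Q x)); last exact: connect_R.
exact: equivalence_partition_pblock HPQ.
Qed.

End Up.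

Lemma endp_ext k N (th1 th2 : 'I_N -> 'I_N -> bool) :
  (forall a b, th1 a b = th2 a b) -> forall a, endp k th1 a = endp k th2 a.
Proof.
move=> h a; rewrite /endp; congr odflt; apply: eq_pick => z /=; rewrite h.
by congr (_ && _); apply: eq_forallb => z'; rewrite h.
Qed.

Unset Implicit Arguments.

Theorem lemma5p1 (n k : nat) (hn : 0 < n) (hk : 0 < k) :
  (forall pi, NClow k n pi -> NCup k n (f_map k n pi)) /\
  (forall pi1 pi2, NClow k n pi1 -> NClow k n pi2 -> f_map k n pi1 = f_map k n pi2 -> pi1 = pi2) /\
  (forall Q, NCup k n Q -> exists pi, NClow k n pi /\ f_map k n pi = Q).
Proof.
split; first by move=> pi Hpi; apply: (F_up hk hn Hpi).
split; last first.
  move=> Q HQ; exists (piQ hk hn Q); split; [exact: (piQ_low hk hn HQ) | exact: (f_piQ hk hn HQ)].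
move=> pi1 pi2 H1 H2 ef.
have the : forall a b, th hk hn pi1 a b = th hk hn pi2 a b.
  by move=> a b; rewrite /th -!F_pblock ef.
rewrite -(equivalence_partition_pblock (HP H1)) -(equivalence_partition_pblock (HP H2)).
apply: eqp_rel => x y.
by rewrite (low_same hk hn H1) (low_same hk hn H2) !(endp_ext k the).
Qed.
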